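(* Let $\ell\ge1$, $\mathbf u=(u_1,\dots,u_\ell)\in\Bbbk^\ell$, $1\le i\le\ell$ and $r\ge1$, and put $g_{r,i}:=g_r(u_1)\circ g_r(u_2)\circ\cdots\circ g_r(u_i)\in\mathrm{End}_{\mathcal{AS}}(r)$. Let $\gamma$ be a strict $(1+\ell)$-multicomposition with $\gamma^{(0)}=\gamma^{(1)}=\cdots=\gamma^{(i-1)}=\emptyset$ and $\gamma^{(i)}=(r,\gamma^{(i)}_2,\dots)$, so that $w(\gamma)=(u_1,\dots,u_i,r,y)$ for some word $y$. Then the image in $\mathrm{End}_{\mathcal{S}chur_{\mathbf u}}(\gamma)$ of the morphism $1_{u_1}\otimes\cdots\otimes1_{u_i}\otimes g_{r,i}\otimes 1_y$ is zero.
   Context: Let $\Bbbk$ be a commutative ring with $1$. The affine Schur category $\mathcal{AS}$ is the strict $\Bbbk$-linear monoidal category defined as follows. Generating objects: the integers $a\ge1$ (black strands of thickness $a$) and the elements $u\in\Bbbk$ (red strands labelled $u$); objects are finite words in these, tensor product being concatenation. Generating morphisms, for $a,b\ge1$, $u\in\Bbbk$: merge $M_{a,b}:(a,b)\to(a+b)$, split $S_{a,b}:(a+b)\to(a,b)$, crossing $X_{a,b}:(a,b)\to(b,a)$, dot $\omega_a:(a)\to(a)$, traverse-up $U_{a,u}:(a,u)\to(u,a)$, traverse-down $D_{u,a}:(u,a)\to(a,u)$. Conventions: a black strand of thickness $0$ is the unit object and any merge, split or crossing involving a thickness-$0$ strand is an identity. Derived morphisms: $\omega_{a,0}:=1_a$;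 $\omega_{a,r}:=M_{r,a-r}(\omega_r\otimes1_{a-r})S_{r,a-r}$ for $1\le r\le a$; $\omega_{a,r}:=0$ if $r<0$ or $r>a$; $S^{(a)},M^{(a)}$ iterated splits/merges between $(a)$ and $(1,\dots,1)$; $g_r(u):=\sum_{i=0}^{r}(-1)^i\big(\prod_{j=0}^{i-1}(u+j)\big)\omega_{r,r-i}$. Defining relations, for all $a,b,c,d,r\ge1$, $u\in\Bbbk$: (R1) $M_{a+b,c}(M_{a,b}\otimes1_c)=M_{a,b+c}(1_a\otimes M_{b,c})$, $(S_{a,b}\otimes1_c)S_{a+b,c}=(1_a\otimes S_{b,c})S_{a,b+c}$; (R2) if $a+c=b+d$: $S_{b,d}M_{a,c}=\sum(M_{s,c-t}\otimes M_{a-s,t})(1_s\otimes X_{a-s,c-t}\otimes1_t)(S_{s,a-s}\otimes S_{c-t,t})$ over $0\le s\le\min(a,b)$, $0\le t\le\min(c,d)$, $t-s=d-a$; (R3) $M_{a,b}S_{a,b}=\binom{a+b}{a}1_{a+b}$; (R4) $(\omega_b\otimes1_a)X_{a,b}=\sum_{t=0}^{\min(a,b)}t!\,(M_{t,b-t}\otimes M_{a-t,t})(1_t\otimes X_{a-t,b-t}\otimes1_t)(1_t\otimes1_{a-t}\otimes\omega_{b-t}\otimes1_t)(S_{t,a-t}\otimes S_{b-t,t})$ and $X_{b,a}(\omega_b\otimes1_a)=\sum_{t=0}^{\min(a,b)}t!\,(M_{t,a-t}\otimes M_{b-t,t})(1_t\otimes1_{a-t}\otimes\omega_{b-t}\otimes1_t)(1_t\otimes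 X_{b-t,a-t}\otimes1_t)(S_{t,b-t}\otimes S_{a-t,t})$; (R5) $S_{a,b}\omega_{a+b}=(\omega_a\otimes\omega_b)S_{a,b}$, $\omega_{a+b}M_{a,b}=M_{a,b}(\omega_a\otimes\omega_b)$; (R6) $M^{(a)}(\omega_1\otimes\cdots\otimes\omega_1)S^{(a)}=a!\,\omega_a$; (R7) $D_{u,r}U_{r,u}=g_r(u)\otimes1_u$, $U_{r,u}D_{u,r}=1_u\otimes g_r(u)$; (R8) $(D_{u,b}\otimes1_a)(1_u\otimes X_{a,b})(U_{a,u}\otimes1_b)=(1_b\otimes U_{a,u})(X_{a,b}\otimes1_u)(1_a\otimes D_{u,b})+\sum_{t=1}^{\min(a,b)}t!\,(M_{t,b-t}\otimes1_u\otimes M_{a-t,t})(1_t\otimes1_{b-t}\otimes U_{a-t,u}\otimes1_t)(1_t\otimes X_{a-t,b-t}\otimes1_u\otimes1_t)(1_t\otimes1_{a-t}\otimes D_{u,b-t}\otimes1_t)(S_{t,a-t}\otimes1_u\otimes S_{b-t,t})$; (R9) $(1_u\otimes S_{b,c})U_{b+c,u}=(U_{b,u}\otimes1_c)(1_b\otimes U_{c,u})(S_{b,c}\otimes1_u)$, $(S_{a,b}\otimes1_u)D_{u,a+b}=(1_a\otimes D_{u,b})(D_{u,a}\otimes1_b)(1_u\otimes S_{a,b})$, $D_{u,b+c}(1_u\otimes M_{b,c})=(M_{b,c}\otimes1_u)(1_b\otimes D_{u,c})(D_{u,b}\otimes1_c)$, $U_{a+b,u}(M_{a,b}\otimes1_u)=(1_u\otimes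 M_{a,b})(U_{a,u}\otimes1_b)(1_a\otimes U_{b,u})$. Cyclotomic Schur category: fix $\ell\ge1$ and $\mathbf u=(u_1,\dots,u_\ell)\in\Bbbk^\ell$. A strict $(1+\ell)$-multicomposition is a tuple $\lambda=(\lambda^{(0)},\dots,\lambda^{(\ell)})$ of (possibly empty) finite sequences of positive integers; let $w(\lambda):=\lambda^{(0)}\,u_1\,\lambda^{(1)}\,u_2\cdots u_\ell\,\lambda^{(\ell)}$ (an object of $\mathcal{AS}$). The cyclotomic Schur category $\mathcal{S}chur_{\mathbf u}$ is the $\Bbbk$-linear category whose objects are the strict $(1+\ell)$-multicompositions, with $\mathrm{Hom}_{\mathcal{S}chur_{\mathbf u}}(\mu,\lambda)$ the quotient of $\mathrm{Hom}_{\mathcal{AS}}(w(\mu),w(\lambda))$ by the span of all morphisms factoring through an object $w(\gamma)$ with $\gamma^{(0)}\ne\emptyset$ (i.e. the relations of $\mathcal{AS}$ together with $1_\gamma=0$ whenever $\gamma^{(0)}\neq\emptyset$), composition induced from $\mathcal{AS}$. *)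

(* Defs.v *)
(* Affine Schur category AS presented by generators and
   relations, as a syntactic (untyped) term language + typing judgement +
   the congruence generated by the axioms of a strict k-linear monoidal
   category and the relations (R1)-(R9); and the cyclotomic quotient. *)
From mathcomp Require Import all_boot all_algebra.
Set Implicit Arguments. Unset Strict Implicit. Unset Printing Implicit Defensive.
Import GRing.Theory.
Local Open Scope ring_scope.

(* letters of words: black strands of thickness a (a >= 1 for genuine
   objects), red strands labelled u *)
Inductive letter (R : Type) := Blk of nat | Red of R.
Arguments Blk {R} _.
Arguments Red {R} _.

(* raw morphism terms.  Comp f g = f o g (g first). *)
Inductive term (R : Type) :=
| Id of seq (letter R)
| Comp of term R & term R
| Tens of term R & term R
| Zero of seq (letter R) & seq (letter R)
| Add of term R & term R
| Scale of R & term R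
| Merge of nat & nat
| Split of nat & nat
| Cross of nat & nat
| Dot of nat
| Up of nat & R
| Down of R & nat.
Arguments Id {R} _.
Arguments Zero {R} _ _.
Arguments Merge {R} _ _.
Arguments Split {R} _ _.
Arguments Cross {R} _ _.
Arguments Dot {R} _.

Inductive typed (R : Type) : term R -> seq (letter R) -> seq (letter R) -> Prop :=
| tyId w : typed (Id w) w w
| tyComp f g s m t : typed g s m -> typed f m t -> typed (Comp f g) s t
| tyTens f g s1 t1 s2 t2 : typed f s1 t1 -> typed g s2 t2 ->
    typed (Tens f g) (s1 ++ s2) (t1 ++ t2)
| tyZero s t : typed (Zero s t) s t
| tyAdd f g s t : typed f s t -> typed g s t -> typed (Add f g) s t
| tyScale c f s t : typed f s t -> typed (Scale c f) s t
| tyMerge a b : (0 < a)%N -> (0 < b)%N ->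
    typed (Merge a b) [:: Blk a; Blk b] [:: Blk (a + b)]
| tySplit a b : (0 < a)%N -> (0 < b)%N ->
    typed (Split a b) [:: Blk (a + b)] [:: Blk a; Blk b]
| tyCross a b : (0 < a)%N -> (0 < b)%N ->
    typed (Cross a b) [:: Blk a; Blk b] [:: Blk b; Blk a]
| tyDot a : (0 < a)%N -> typed (Dot a) [:: Blk a] [:: Blk a]
| tyUp a u : (0 < a)%N -> typed (Up a u) [:: Blk a; Red u] [:: Red u; Blk a]
| tyDown u a : (0 < a)%N -> typed (Down u a) [:: Red u; Blk a] [:: Blk a; Red u].

Section Derived.
Variable R : comPzRingType.
Local Notation term := (term R).
Local Notation word := (seq (letter R)).

(* thickness-0 strand = unit object *)
Definition blk (a : nat) : word := if a == 0%N then [::] else [:: Blk a].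
Definition idb (a : nat) : term := Id (blk a).

Definition mergeT (a b : nat) : term :=
  if (a == 0%N) || (b == 0%N) then Id (blk (a + b)) else Merge a b.
Definition splitT (a b : nat) : term :=
  if (a == 0%N) || (b == 0%N) then Id (blk (a + b)) else Split a b.
Definition crossT (a b : nat) : term :=
  if (a == 0%N) || (b == 0%N) then Id (blk a ++ blk b) else Cross a b.
Definition dotT (a : nat) : term := if a == 0%N then Id [::] else Dot a.
Definition upT (a : nat) (u : R) : term :=
  if a == 0%N then Id [:: Red u] else Up a u.
Definition downT (u : R) (a : nat) : term :=
  if a == 0%N then Id [:: Red u] else Down u a.

Definition tsum (s t : word) (l : seq term) : term := foldr (@Add R) (Zero s t) l.

Definition omega (a r : nat) : term :=
  if r == 0%N then idb a
  else if (a < r)%N then Zero (blk a) (blk a)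
  else Comp (mergeT r (a - r)) (Comp (Tens (dotT r) (idb (a - r))) (splitT r (a - r))).

Definition gpoly (r : nat) (u : R) : term :=
  tsum (blk r) (blk r)
    [seq Scale ((-1) ^+ i * \prod_(j < i) (u + j%:R)) (omega r (r - i)) | i <- iota 0 r.+1].

Fixpoint splitn (a : nat) : term :=
  match a with
  | 0 => Id [::]
  | 1 => Id [:: Blk 1]
  | n.+1 => Comp (Tens (Id [:: Blk 1]) (splitn n)) (splitT 1 n)
  end.
Fixpoint mergen (a : nat) : term :=
  match a with
  | 0 => Id [::]
  | 1 => Id [:: Blk 1]
  | n.+1 => Comp (mergeT 1 n) (Tens (Id [:: Blk 1]) (mergen n))
  end.
Fixpoint dots1 (a : nat) : term :=
  match a with
  | 0 => Id [::]
  | n.+1 => Tens (Dot 1) (dots1 n)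
  end.

Definition R2sum (a b c d : nat) : term :=
  tsum [:: Blk a; Blk c] [:: Blk b; Blk d]
   [seq Comp (Tens (mergeT p.1 (c - p.2)) (mergeT (a - p.1) p.2))
        (Comp (Tens (idb p.1) (Tens (crossT (a - p.1) (c - p.2)) (idb p.2)))
              (Tens (splitT p.1 (a - p.1)) (splitT (c - p.2) p.2)))
   | p <- [seq p <- allpairs pair (iota 0 (minn a b).+1) (iota 0 (minn c d).+1)
           | (p.2 + a == p.1 + d)%N]].

Definition R4sumL (a b : nat) : term :=
  tsum [:: Blk a; Blk b] [:: Blk b; Blk a]
   [seq Scale (t`!)%:R
      (Comp (Tens (mergeT t (b - t)) (mergeT (a - t) t))
      (Comp (Tens (idb t) (Tens (crossT (a - t) (b - t)) (idb t)))
      (Comp (Tens (idb t) (Tens (idb (a - t)) (Tens (dotT (b - t)) (idb t))))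
            (Tens (splitT t (a - t)) (splitT (b - t) t)))))
   | t <- iota 0 (minn a b).+1].

Definition R4sumR (a b : nat) : term :=
  tsum [:: Blk b; Blk a] [:: Blk a; Blk b]
   [seq Scale (t`!)%:R
      (Comp (Tens (mergeT t (a - t)) (mergeT (b - t) t))
      (Comp (Tens (idb t) (Tens (idb (a - t)) (Tens (dotT (b - t)) (idb t))))
      (Comp (Tens (idb t) (Tens (crossT (b - t) (a - t)) (idb t)))
            (Tens (splitT t (b - t)) (splitT (a - t) t)))))
   | t <- iota 0 (minn a b).+1].

Definition R8sum (a b : nat) (u : R) : term :=
  tsum [:: Blk a; Red u; Blk b] [:: Blk b; Red u; Blk a]
   [seq Scale (t`!)%:R
      (Comp (Tens (mergeT t (b - t)) (Tens (Id [:: Red u]) (mergeT (a - t) t)))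
      (Comp (Tens (idb t) (Tens (idb (b - t)) (Tens (upT (a - t) u) (idb t))))
      (Comp (Tens (idb t) (Tens (crossT (a - t) (b - t)) (Tens (Id [:: Red u]) (idb t))))
      (Comp (Tens (idb t) (Tens (idb (a - t)) (Tens (downT u (b - t)) (idb t))))
            (Tens (splitT t (a - t)) (Tens (Id [:: Red u]) (splitT (b - t) t)))))))
   | t <- iota 1 (minn a b)].

Inductive eqv : term -> term -> Prop :=
| e_refl f : eqv f f
| e_sym f g : eqv f g -> eqv g f
| e_trans f g h : eqv f g -> eqv g h -> eqv f h
| e_comp f f' g g' : eqv f f' -> eqv g g' -> eqv (Comp f g) (Comp f' g')
| e_tens f f' g g' : eqv f f' -> eqv g g' -> eqv (Tens f g) (Tens f' g')
| e_add f f' g g' : eqv f f' -> eqv g g' -> eqv (Add f g) (Add f' g')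
| e_scale c f f' : eqv f f' -> eqv (Scale c f) (Scale c f')
| e_idl f s t : typed f s t -> eqv (Comp (Id t) f) f
| e_idr f s t : typed f s t -> eqv (Comp f (Id s)) f
| e_cassoc f g h s m1 m2 t : typed h s m1 -> typed g m1 m2 -> typed f m2 t ->
    eqv (Comp (Comp f g) h) (Comp f (Comp g h))
| e_tid s t : eqv (Tens (Id s) (Id t)) (Id (s ++ t))
| e_tunitl f s t : typed f s t -> eqv (Tens (Id [::]) f) f
| e_tunitr f s t : typed f s t -> eqv (Tens f (Id [::])) f
| e_tassoc f g h s1 t1 s2 t2 s3 t3 :
    typed f s1 t1 -> typed g s2 t2 -> typed h s3 t3 ->
    eqv (Tens (Tens f g) h) (Tens f (Tens g h))
| e_interchange f f' g g' s1 m1 t1 s2 m2 t2 :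
    typed f' s1 m1 -> typed f m1 t1 -> typed g' s2 m2 -> typed g m2 t2 ->
    eqv (Tens (Comp f f') (Comp g g')) (Comp (Tens f g) (Tens f' g'))
| e_addC f g s t : typed f s t -> typed g s t -> eqv (Add f g) (Add g f)
| e_addA f g h s t : typed f s t -> typed g s t -> typed h s t ->
    eqv (Add (Add f g) h) (Add f (Add g h))
| e_add0 f s t : typed f s t -> eqv (Add f (Zero s t)) f
| e_scale1 f s t : typed f s t -> eqv (Scale 1 f) f
| e_scale0 f s t : typed f s t -> eqv (Scale 0 f) (Zero s t)
| e_scaleA c d f s t : typed f s t -> eqv (Scale c (Scale d f)) (Scale (c * d) f)
| e_scaleDl c d f s t : typed f s t ->
    eqv (Scale (c + d) f) (Add (Scale c f) (Scale d f))
| e_scaleDr c f g s t : typed f s t -> typed g s t ->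
    eqv (Scale c (Add f g)) (Add (Scale c f) (Scale c g))
| e_compDl f g h s m t : typed h s m -> typed f m t -> typed g m t ->
    eqv (Comp (Add f g) h) (Add (Comp f h) (Comp g h))
| e_compDr f g h s m t : typed g s m -> typed h s m -> typed f m t ->
    eqv (Comp f (Add g h)) (Add (Comp f g) (Comp f h))
| e_compZl c f g s m t : typed g s m -> typed f m t ->
    eqv (Comp (Scale c f) g) (Scale c (Comp f g))
| e_compZr c f g s m t : typed g s m -> typed f m t ->
    eqv (Comp f (Scale c g)) (Scale c (Comp f g))
| e_tensDl f g h s1 t1 s2 t2 : typed f s1 t1 -> typed g s1 t1 -> typed h s2 t2 ->
    eqv (Tens (Add f g) h) (Add (Tens f h) (Tens g h))
| e_tensDr f g h s1 t1 s2 t2 : typed f s1 t1 -> typed g s2 t2 -> typed h s2 t2 ->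
    eqv (Tens f (Add g h)) (Add (Tens f g) (Tens f h))
| e_tensZl c f g s1 t1 s2 t2 : typed f s1 t1 -> typed g s2 t2 ->
    eqv (Tens (Scale c f) g) (Scale c (Tens f g))
| e_tensZr c f g s1 t1 s2 t2 : typed f s1 t1 -> typed g s2 t2 ->
    eqv (Tens f (Scale c g)) (Scale c (Tens f g))
| e_R1m a b c : (0 < a)%N -> (0 < b)%N -> (0 < c)%N ->
    eqv (Comp (mergeT (a + b) c) (Tens (mergeT a b) (idb c)))
        (Comp (mergeT a (b + c)) (Tens (idb a) (mergeT b c)))
| e_R1s a b c : (0 < a)%N -> (0 < b)%N -> (0 < c)%N ->
    eqv (Comp (Tens (splitT a b) (idb c)) (splitT (a + b) c))
        (Comp (Tens (idb a) (splitT b c)) (splitT a (b + c)))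
| e_R2 a b c d : (0 < a)%N -> (0 < b)%N -> (0 < c)%N -> (0 < d)%N ->
    (a + c = b + d)%N ->
    eqv (Comp (splitT b d) (mergeT a c)) (R2sum a b c d)
| e_R3 a b : (0 < a)%N -> (0 < b)%N ->
    eqv (Comp (mergeT a b) (splitT a b)) (Scale ('C(a + b, a))%:R (idb (a + b)))
| e_R4l a b : (0 < a)%N -> (0 < b)%N ->
    eqv (Comp (Tens (dotT b) (idb a)) (crossT a b)) (R4sumL a b)
| e_R4r a b : (0 < a)%N -> (0 < b)%N ->
    eqv (Comp (crossT b a) (Tens (dotT b) (idb a))) (R4sumR a b)
| e_R5s a b : (0 < a)%N -> (0 < b)%N ->
    eqv (Comp (splitT a b) (dotT (a + b))) (Comp (Tens (dotT a) (dotT b)) (splitT a b))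
| e_R5m a b : (0 < a)%N -> (0 < b)%N ->
    eqv (Comp (dotT (a + b)) (mergeT a b)) (Comp (mergeT a b) (Tens (dotT a) (dotT b)))
| e_R6 a : (0 < a)%N ->
    eqv (Comp (mergen a) (Comp (dots1 a) (splitn a))) (Scale (a`!)%:R (dotT a))
| e_R7du r u : (0 < r)%N ->
    eqv (Comp (downT u r) (upT r u)) (Tens (gpoly r u) (Id [:: Red u]))
| e_R7ud r u : (0 < r)%N ->
    eqv (Comp (upT r u) (downT u r)) (Tens (Id [:: Red u]) (gpoly r u))
| e_R8 a b u : (0 < a)%N -> (0 < b)%N ->
    eqv (Comp (Tens (downT u b) (idb a)) (Comp (Tens (Id [:: Red u]) (crossT a b))
                                               (Tens (upT a u) (idb b))))
        (Add (Comp (Tens (idb b) (upT a u)) (Comp (Tens (crossT a b) (Id [:: Red u]))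
                                                  (Tens (idb a) (downT u b))))
             (R8sum a b u))
| e_R9a b c u : (0 < b)%N -> (0 < c)%N ->
    eqv (Comp (Tens (Id [:: Red u]) (splitT b c)) (upT (b + c) u))
        (Comp (Tens (upT b u) (idb c)) (Comp (Tens (idb b) (upT c u))
                                             (Tens (splitT b c) (Id [:: Red u]))))
| e_R9b a b u : (0 < a)%N -> (0 < b)%N ->
    eqv (Comp (Tens (splitT a b) (Id [:: Red u])) (downT u (a + b)))
        (Comp (Tens (idb a) (downT u b)) (Comp (Tens (downT u a) (idb b))
                                               (Tens (Id [:: Red u]) (splitT a b))))
| e_R9c b c u : (0 < b)%N -> (0 < c)%N ->
    eqv (Comp (downT u (b + c)) (Tens (Id [:: Red u]) (mergeT b c)))
        (Comp (Tens (mergeT b c) (Id [:: Red u])) (Comp (Tens (idb b) (downT u c))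
                                                        (Tens (downT u b) (idb c))))
| e_R9d a b u : (0 < a)%N -> (0 < b)%N ->
    eqv (Comp (upT (a + b) u) (Tens (mergeT a b) (Id [:: Red u])))
        (Comp (Tens (Id [:: Red u]) (mergeT a b)) (Comp (Tens (upT a u) (idb b))
                                                        (Tens (idb a) (upT b u)))).

Definition strict_multicomp (l : nat) (lam : seq (seq nat)) : Prop :=
  size lam = l.+1 /\ all (all (fun a => (0 < a)%N)) lam.

Definition wword (u : seq R) (lam : seq (seq nat)) : word :=
  match lam with
  | [::] => [::]
  | l0 :: ls => map Blk l0 ++ flatten [seq Red p.1 :: map Blk p.2 | p <- zip u ls]
  end.

Definition bad_word (l : nat) (u : seq R) (w : word) : Prop :=
  exists gam, strict_multicomp l gam /\ nth [::] gam 0 <> [::] /\ w = wword u gam.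

Inductive in_cyc_ideal (l : nat) (u : seq R) (s : word) : term -> Prop :=
| ci_zero : in_cyc_ideal l u s (Zero s s)
| ci_add w a b h : bad_word l u w -> typed b s w -> typed a w s ->
    in_cyc_ideal l u s h -> in_cyc_ideal l u s (Add (Comp a b) h).

(* f : s -> s (s = w(gamma)) has zero image in End_{Schur_u}(gamma) *)
Definition cyc_zero (l : nat) (u : seq R) (s : word) (f : term) : Prop :=
  exists h, in_cyc_ideal l u s h /\ eqv f h.

Definition g_ri (r : nat) (u : seq R) (i : nat) : term :=
  foldr (fun x acc => Comp (gpoly r x) acc) (idb r) (take i u).

End Derived.

(* Main.v *)
Require Import Defs.
From mathcomp Require Import all_boot all_algebra.
From Stdlib Require Import Setoid Morphisms.
From Stdlib Require List.
Set Implicit Arguments. Unset Strict Implicit. Unset Printing Implicit Defensive.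

Section Infra.
Variable R : comPzRingType.
Local Notation term := (term R).
Local Notation word := (seq (letter R)).

Fixpoint src (f : term) : word :=
  match f with
  | Defs.Id w => w | Comp f g => src g | Tens f g => src f ++ src g
  | Zero s t => s | Add f g => src f | Scale _ f => src f
  | Defs.Merge a b => [:: Blk a; Blk b] | Defs.Split a b => [:: Blk (a + b)]
  | Defs.Cross a b => [:: Blk a; Blk b] | Defs.Dot a => [:: Blk a]
  | Defs.Up a u => [:: Blk a; Red u] | Defs.Down u a => [:: Red u; Blk a]
  end.
Fixpoint tgt (f : term) : word :=
  match f with
  | Defs.Id w => w | Comp f g => tgt f | Tens f g => tgt f ++ tgt g
  | Zero s t => t | Add f g => tgt f | Scale _ f => tgt f
  | Defs.Merge a b => [:: Blk (a + b)] | Defs.Split a b => [:: Blk a; Blk b]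
  | Defs.Cross a b => [:: Blk b; Blk a] | Defs.Dot a => [:: Blk a]
  | Defs.Up a u => [:: Red u; Blk a] | Defs.Down u a => [:: Blk a; Red u]
  end.
Fixpoint wtP (f : term) : Prop :=
  match f with
  | Defs.Id _ => True | Comp f g => [/\ wtP f, wtP g & src f = tgt g]
  | Tens f g => wtP f /\ wtP g
  | Zero _ _ => True
  | Add f g => [/\ wtP f, wtP g, src f = src g & tgt f = tgt g]
  | Scale _ f => wtP f
  | Defs.Merge a b => (0 < a)%N /\ (0 < b)%N | Defs.Split a b => (0 < a)%N /\ (0 < b)%N
  | Defs.Cross a b => (0 < a)%N /\ (0 < b)%N | Defs.Dot a => (0 < a)%N
  | Defs.Up a _ => (0 < a)%N | Defs.Down _ a => (0 < a)%N
  end.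

Lemma wt_typed f : wtP f -> typed f (src f) (tgt f).
Proof.
elim: f => /=.
- by move=> w _; constructor.
- move=> f IHf g IHg [Hf Hg E]; apply: tyComp (IHg Hg) _; rewrite -E; exact: IHf.
- move=> f IHf g IHg [Hf Hg]; constructor; auto.
- by move=> *; constructor.
- move=> f IHf g IHg [Hf Hg E1 E2]; apply: tyAdd (IHf Hf) _; rewrite E1 E2; exact: IHg.
- move=> c f IHf Hf; constructor; auto.
- move=> a b [Ha Hb]; exact: tyMerge.
- move=> a b [Ha Hb]; exact: tySplit.
- move=> a b [Ha Hb]; exact: tyCross.
- by move=> *; constructor.
- by move=> *; constructor.
- by move=> *; constructor.
Qed.

Lemma typed_wt f s t : typed f s t -> [/\ wtP f, src f = s & tgt f = t].
Proof.
elim=> //=; clear; intros;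
  repeat match goal with H : [/\ _, _ & _] |- _ => case: H => ? ? ? end; subst; by split.
Qed.

Lemma eqv_refl' : Reflexive (@eqv R). Proof. exact: e_refl. Qed.
Lemma eqv_sym' : Symmetric (@eqv R). Proof. exact: e_sym. Qed.
Lemma eqv_trans' : Transitive (@eqv R). Proof. exact: e_trans. Qed.

End Infra.

Add Parametric Relation (R : comPzRingType) : (term R) (@eqv R)
  reflexivity proved by (@eqv_refl' R)
  symmetry proved by (@eqv_sym' R)
  transitivity proved by (@eqv_trans' R) as eqv_rel.
Add Parametric Morphism (R : comPzRingType) : (@Comp R) with signature
  (@eqv R) ==> (@eqv R) ==> (@eqv R) as Comp_mor.
Proof. move=> *; exact: e_comp. Qed.
Add Parametric Morphism (R : comPzRingType) : (@Tens R) with signature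
  (@eqv R) ==> (@eqv R) ==> (@eqv R) as Tens_mor.
Proof. move=> *; exact: e_tens. Qed.
Add Parametric Morphism (R : comPzRingType) : (@Add R) with signature
  (@eqv R) ==> (@eqv R) ==> (@eqv R) as Add_mor.
Proof. move=> *; exact: e_add. Qed.
Add Parametric Morphism (R : comPzRingType) c : (@Scale R c) with signature
  (@eqv R) ==> (@eqv R) as Scale_mor.
Proof. move=> *; exact: e_scale. Qed.
#[global] Hint Resolve e_refl : core.
Section Ax.
Variable R : comPzRingType.
Local Notation term := (term R).
Local Notation word := (seq (letter R)).
Implicit Types f g h : term.

Lemma idl f w : w = tgt f -> wtP f -> eqv (Comp (Id w) f) f.
Proof. move=> -> /wt_typed H; exact: e_idl H. Qed.
Lemma idr f w : w = src f -> wtP f -> eqv (Comp f (Id w)) f.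
Proof. move=> -> /wt_typed H; exact: e_idr H. Qed.
Lemma cassoc f g h : wtP (Comp (Comp f g) h) -> eqv (Comp (Comp f g) h) (Comp f (Comp g h)).
Proof.
move=> /= [[Hf Hg E1] Hh E2].
apply: (e_cassoc (s:=src h) (m1:=tgt h) (m2:=tgt g) (t:=tgt f)).
- exact: wt_typed.
- rewrite -E2; exact: wt_typed.
- rewrite -E1; exact: wt_typed.
Qed.
Lemma tid (s t : word) : eqv (Tens (Id s) (Id t)) (Id (s ++ t)).
Proof. exact: e_tid. Qed.
Lemma tunitl f : wtP f -> eqv (Tens (Id [::]) f) f.
Proof. move/wt_typed=> H; exact: e_tunitl H. Qed.
Lemma tunitr f : wtP f -> eqv (Tens f (Id [::])) f.
Proof. move/wt_typed=> H; exact: e_tunitr H. Qed.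
Lemma tassoc f g h : wtP f -> wtP g -> wtP h -> eqv (Tens (Tens f g) h) (Tens f (Tens g h)).
Proof. move=> /wt_typed H1 /wt_typed H2 /wt_typed H3; exact: e_tassoc H1 H2 H3. Qed.
Lemma interch f f' g g' : wtP (Comp f f') -> wtP (Comp g g') ->
  eqv (Tens (Comp f f') (Comp g g')) (Comp (Tens f g) (Tens f' g')).
Proof.
move=> /= [Hf Hf' E1] [Hg Hg' E2].
apply: (e_interchange (s1:=src f') (m1:=tgt f') (t1:=tgt f) (s2:=src g') (m2:=tgt g') (t2:=tgt g)).
- exact: wt_typed.
- rewrite -E1; exact: wt_typed.
- exact: wt_typed.
- rewrite -E2; exact: wt_typed.
Qed.
Lemma addC f g : wtP (Add f g) -> eqv (Add f g) (Add g f).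
Proof.
move=> /= [Hf Hg E1 E2]; apply: (e_addC (s:=src f) (t:=tgt f)); first exact: wt_typed.
rewrite E1 E2; exact: wt_typed.
Qed.
Lemma addA f g h : wtP (Add (Add f g) h) -> eqv (Add (Add f g) h) (Add f (Add g h)).
Proof.
move=> /= [[Hf Hg E1 E2] Hh E3 E4]; apply: (e_addA (s:=src f) (t:=tgt f)); first exact: wt_typed.
- rewrite E1 E2; exact: wt_typed.
- rewrite E3 E4; exact: wt_typed.
Qed.
Lemma add0 f s t : s = src f -> t = tgt f -> wtP f -> eqv (Add f (Zero s t)) f.
Proof. move=> -> -> /wt_typed H; exact: e_add0 H. Qed.
Lemma scale1 f : wtP f -> eqv (Scale 1%R f) f.
Proof. move/wt_typed=> H; exact: e_scale1 H. Qed.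
Lemma scale0 f s t : s = src f -> t = tgt f -> wtP f -> eqv (Scale 0%R f) (Zero s t).
Proof. move=> -> -> /wt_typed H; exact: e_scale0 H. Qed.
Lemma scaleA c d f : wtP f -> eqv (Scale c (Scale d f)) (Scale (c * d)%R f).
Proof. move/wt_typed=> H; exact: e_scaleA H. Qed.
Lemma scaleDl c d f : wtP f -> eqv (Scale (c + d)%R f) (Add (Scale c f) (Scale d f)).
Proof. move/wt_typed=> H; exact: e_scaleDl H. Qed.
Lemma scaleDr c f g : wtP (Add f g) -> eqv (Scale c (Add f g)) (Add (Scale c f) (Scale c g)).
Proof.
move=> /= [Hf Hg E1 E2]; apply: (e_scaleDr c (s:=src f) (t:=tgt f)); first exact: wt_typed.
rewrite E1 E2; exact: wt_typed.
Qed.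
Lemma compDl f g h : wtP (Comp (Add f g) h) -> eqv (Comp (Add f g) h) (Add (Comp f h) (Comp g h)).
Proof.
move=> /= [[Hf Hg E1 E2] Hh E3]; apply: (e_compDl (s:=src h) (m:=tgt h) (t:=tgt f)).
- exact: wt_typed.
- rewrite -E3; exact: wt_typed.
- rewrite -E3 E1 E2; exact: wt_typed.
Qed.
Lemma compDr f g h : wtP (Comp f (Add g h)) -> eqv (Comp f (Add g h)) (Add (Comp f g) (Comp f h)).
Proof.
move=> /= [Hf [Hg Hh E1 E2] E3]; apply: (e_compDr (s:=src g) (m:=tgt g) (t:=tgt f)).
- exact: wt_typed.
- rewrite E1 E2; exact: wt_typed.
- rewrite -E3; exact: wt_typed.
Qed.
Lemma compZl c f g : wtP (Comp f g) -> eqv (Comp (Scale c f) g) (Scale c (Comp f g)).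
Proof.
move=> /= [Hf Hg E]; apply: (e_compZl c (s:=src g) (m:=tgt g) (t:=tgt f)).
- exact: wt_typed.
- rewrite -E; exact: wt_typed.
Qed.
Lemma compZr c f g : wtP (Comp f g) -> eqv (Comp f (Scale c g)) (Scale c (Comp f g)).
Proof.
move=> /= [Hf Hg E]; apply: (e_compZr c (s:=src g) (m:=tgt g) (t:=tgt f)).
- exact: wt_typed.
- rewrite -E; exact: wt_typed.
Qed.
Lemma tensDl f g h : wtP (Add f g) -> wtP h -> eqv (Tens (Add f g) h) (Add (Tens f h) (Tens g h)).
Proof.
move=> /= [Hf Hg E1 E2] Hh; apply: (e_tensDl (s1:=src f) (t1:=tgt f) (s2:=src h) (t2:=tgt h)).
- exact: wt_typed.
- rewrite E1 E2; exact: wt_typed.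
- exact: wt_typed.
Qed.
Lemma tensDr f g h : wtP f -> wtP (Add g h) -> eqv (Tens f (Add g h)) (Add (Tens f g) (Tens f h)).
Proof.
move=> /= Hf [Hg Hh E1 E2]; apply: (e_tensDr (s1:=src f) (t1:=tgt f) (s2:=src g) (t2:=tgt g)).
- exact: wt_typed.
- exact: wt_typed.
- rewrite E1 E2; exact: wt_typed.
Qed.
Lemma tensZl c f g : wtP f -> wtP g -> eqv (Tens (Scale c f) g) (Scale c (Tens f g)).
Proof. move=> /wt_typed H1 /wt_typed H2; exact: e_tensZl H1 H2. Qed.
Lemma tensZr c f g : wtP f -> wtP g -> eqv (Tens f (Scale c g)) (Scale c (Tens f g)).
Proof. move=> /wt_typed H1 /wt_typed H2; exact: e_tensZr H1 H2. Qed.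

End Ax.
Ltac wtsplit := repeat match goal with
  | |- _ /\ _ => split | |- [/\ _, _ & _] => split | |- [/\ _, _, _ & _] => split
  | |- True => exact I end.
Ltac wtrw := repeat match goal with
  | H : src ?x = _ |- context [src ?x] => rewrite H
  | H : tgt ?x = _ |- context [tgt ?x] => rewrite H end.
Ltac wt := cbn [wtP src tgt cat]; wtsplit; wtrw; cbn [cat]; try done; try reflexivity; try assumption.

Section Der.
Variable R : comPzRingType.
Local Notation term := (term R).
Local Notation word := (seq (letter R)).
Implicit Types f g h : term.

Lemma blk_pos a : (0 < a)%N -> blk R a = [:: Blk a].
Proof. by rewrite /blk; case: a. Qed.
Lemma idb_pos a : (0 < a)%N -> idb R a = Id [:: Blk a].
Proof. by rewrite /idb; case: a. Qed.
Lemma mergeT_pos a b : (0 < a)%N -> (0 < b)%N -> mergeT R a b = Merge a b.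
Proof. by rewrite /mergeT; case: a => //; case: b. Qed.
Lemma splitT_pos a b : (0 < a)%N -> (0 < b)%N -> splitT R a b = Defs.Split a b.
Proof. by rewrite /splitT; case: a => //; case: b. Qed.
Lemma dotT_pos a : (0 < a)%N -> dotT R a = Defs.Dot a.
Proof. by rewrite /dotT; case: a. Qed.
Lemma upT_pos a (u : R) : (0 < a)%N -> upT a u = Up a u.
Proof. by rewrite /upT; case: a. Qed.
Lemma downT_pos a (u : R) : (0 < a)%N -> downT u a = Down u a.
Proof. by rewrite /downT; case: a. Qed.

Lemma tens_comp_r f g (w : word) : wtP (Comp f g) ->
  eqv (Tens (Comp f g) (Id w)) (Comp (Tens f (Id w)) (Tens g (Id w))).
Proof.
move=> H; transitivity (Tens (Comp f g) (Comp (Id w) (Id w))).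
  by apply: e_tens; [reflexivity | symmetry; apply: idl].
by apply: interch.
Qed.
Lemma tens_comp_l f g (w : word) : wtP (Comp f g) ->
  eqv (Tens (Id w) (Comp f g)) (Comp (Tens (Id w) f) (Tens (Id w) g)).
Proof.
move=> H; transitivity (Tens (Comp (Id w) (Id w)) (Comp f g)).
  by apply: e_tens; [symmetry; apply: idl | reflexivity].
by apply: interch.
Qed.
Lemma slideA g h (w1 w2 : word) : w1 = tgt g -> w2 = src h -> wtP g -> wtP h ->
  eqv (Comp (Tens (Id w1) h) (Tens g (Id w2))) (Tens g h).
Proof.
move=> -> -> Hg Hh; rewrite -interch; [|by wt|by wt].
rewrite idl //; rewrite idr //; reflexivity.
Qed.
Lemma slideB g h (w1 w2 : word) : w1 = tgt h -> w2 = src g -> wtP g -> wtP h ->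
  eqv (Comp (Tens g (Id w1)) (Tens (Id w2) h)) (Tens g h).
Proof.
move=> -> -> Hg Hh; rewrite -interch; [|by wt|by wt].
rewrite idl //; rewrite idr //; reflexivity.
Qed.
End Der.
Section Zer.
Variable R : comPzRingType.
Local Notation term := (term R).
Local Notation word := (seq (letter R)).
Implicit Types f g h : term.

Lemma zero_scale (s t : word) : eqv (Zero s t) (Scale 0%R (Zero s t)).
Proof. symmetry; exact: scale0. Qed.

Lemma compZero_r f (s t : word) : t = src f -> wtP f -> eqv (Comp f (Zero s t)) (Zero s (tgt f)).
Proof.
move=> E Hf; rewrite {1}(zero_scale s t) compZr; last by wt.
apply: scale0 => //; by wt.
Qed.
Lemma compZero_l g (s t : word) : s = tgt g -> wtP g -> eqv (Comp (Zero s t) g) (Zero (src g) t).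
Proof.
move=> E Hg; rewrite {1}(zero_scale s t) compZl; last by wt.
apply: scale0 => //; by wt.
Qed.
Lemma tensZero_l h (s t : word) : wtP h -> eqv (Tens (Zero s t) h) (Zero (s ++ src h) (t ++ tgt h)).
Proof.
move=> Hh; rewrite {1}(zero_scale s t) tensZl //.
apply: scale0 => //; by wt.
Qed.
Lemma tensZero_r h (s t : word) : wtP h -> eqv (Tens h (Zero s t)) (Zero (src h ++ s) (tgt h ++ t)).
Proof.
move=> Hh; rewrite {1}(zero_scale s t) tensZr //.
apply: scale0 => //; by wt.
Qed.

Lemma add_neg (P Q : term) : wtP (Add P Q) -> eqv P (Add (Add P Q) (Scale (-1)%R Q)).
Proof.
move=> H; have := H; case=> HP HQ E1 E2.
rewrite addA; last by wt.
transitivity (Add P (Add (Scale 1%R Q) (Scale (-1)%R Q))).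
  rewrite -scaleDl // GRing.addrN scale0 // add0 //; by wt.
apply: e_add; first reflexivity; apply: e_add; last reflexivity; exact: scale1.
Qed.

Lemma add_cancel (P Q P' Q' : term) : wtP (Add P Q) -> wtP (Add P' Q') ->
  eqv (Add P Q) (Add P' Q') -> eqv Q Q' -> eqv P P'.
Proof.
move=> H H' E1 E2.
transitivity (Add (Add P Q) (Scale (-1)%R Q)); first exact: add_neg.
transitivity (Add (Add P' Q') (Scale (-1)%R Q')); last by symmetry; exact: add_neg.
by apply: e_add => //; apply: e_scale.
Qed.
End Zer.
Section Nat.
Variable R : comPzRingType.
Local Notation term := (term R).
Local Notation word := (seq (letter R)).
Implicit Types f g h : term.

Definition natU1 (r : nat) f (u : R) :=
  eqv (Comp (Up r u) (Tens f (Id [:: Red u]))) (Comp (Tens (Id [:: Red u]) f) (Up r u)).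
Definition endo (r : nat) f := [/\ wtP f, src f = [:: Blk r] & tgt f = [:: Blk r]].

Lemma nat_id r u : (0 < r)%N -> natU1 r (Id [:: Blk r]) u.
Proof.
move=> Hr; rewrite /natU1 !tid /=.
rewrite idr //; rewrite idl //.
Qed.

Lemma nat_comp r f g u : (0 < r)%N -> endo r f -> endo r g -> natU1 r f u -> natU1 r g u -> natU1 r (Comp f g) u.
Proof.
move=> Hr [Hf Sf Tf] [Hg Sg Tg] Nf Ng; rewrite /natU1.
rewrite tens_comp_r; last by wt.
rewrite tens_comp_l; last by wt.
rewrite -cassoc; last by wt.
rewrite Nf cassoc; last by wt.
rewrite Ng -cassoc //; by wt.
Qed.

Lemma nat_add r f g u : (0 < r)%N -> endo r f -> endo r g -> natU1 r f u -> natU1 r g u -> natU1 r (Add f g) u.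
Proof.
move=> Hr [Hf Sf Tf] [Hg Sg Tg] Nf Ng; rewrite /natU1.
rewrite tensDl; [|by wt|by wt].
rewrite tensDr; [|by wt|by wt].
rewrite compDr; last by wt.
rewrite compDl; last by wt.
by rewrite Nf Ng.
Qed.

Lemma nat_scale r c f u : (0 < r)%N -> endo r f -> natU1 r f u -> natU1 r (Scale c f) u.
Proof.
move=> Hr [Hf Sf Tf] Nf; rewrite /natU1.
rewrite tensZl; [|by wt|by wt].
rewrite tensZr; [|by wt|by wt].
rewrite compZr; last by wt.
rewrite compZl; last by wt.
by rewrite Nf.
Qed.

Lemma nat_zero r u : (0 < r)%N -> natU1 r (Zero [:: Blk r] [:: Blk r]) u.
Proof.
move=> Hr; rewrite /natU1.
rewrite tensZero_l //= tensZero_r //= compZero_r //= compZero_l //=.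
Qed.

Lemma endo_comp r f g : endo r f -> endo r g -> endo r (Comp f g).
Proof. move=> [Hf Sf Tf] [Hg Sg Tg]; rewrite /endo; wt. Qed.
Lemma endo_add r f g : endo r f -> endo r g -> endo r (Add f g).
Proof. move=> [Hf Sf Tf] [Hg Sg Tg]; rewrite /endo; wt. Qed.
Lemma endo_scale r c f : endo r f -> endo r (Scale c f).
Proof. move=> [Hf Sf Tf]; rewrite /endo; wt. Qed.

Lemma nat_tsum r l u : (0 < r)%N -> (forall f, List.In f l -> endo r f /\ natU1 r f u) ->
  endo r (tsum [:: Blk r] [:: Blk r] l) /\ natU1 r (tsum [:: Blk r] [:: Blk r] l) u.
Proof.
move=> Hr; elim: l => [|f l IH] H /=.
  split; [by rewrite /endo; wt | exact: nat_zero].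
have [Ef Nf] := H f (or_introl erefl).
have [El Nl] : endo r (tsum [:: Blk r] [:: Blk r] l) /\ natU1 r (tsum [:: Blk r] [:: Blk r] l) u.
  by apply: IH => g Hg; apply: H; right.
split; [exact: endo_add | exact: nat_add].
Qed.

Lemma R9d' a b (u : R) : (0 < a)%N -> (0 < b)%N ->
  eqv (Comp (Up (a + b) u) (Tens (Merge a b) (Id [:: Red u])))
      (Comp (Tens (Id [:: Red u]) (Merge a b))
            (Comp (Tens (Up a u) (Id [:: Blk b])) (Tens (Id [:: Blk a]) (Up b u)))).
Proof.
move=> Ha Hb; have := e_R9d u Ha Hb.
by rewrite upT_pos ?addn_gt0 ?Ha // mergeT_pos // !upT_pos // !idb_pos.
Qed.

Lemma R9a' a b (u : R) : (0 < a)%N -> (0 < b)%N ->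
  eqv (Comp (Tens (Id [:: Red u]) (Defs.Split a b)) (Up (a + b) u))
      (Comp (Tens (Up a u) (Id [:: Blk b]))
            (Comp (Tens (Id [:: Blk a]) (Up b u)) (Tens (Defs.Split a b) (Id [:: Red u])))).
Proof.
move=> Ha Hb; have := e_R9a u Ha Hb.
by rewrite upT_pos ?addn_gt0 ?Ha // splitT_pos // !upT_pos // !idb_pos.
Qed.

Lemma mid1 a b f u : (0 < a)%N -> (0 < b)%N -> endo a f ->
  eqv (Comp (Tens (Id [:: Blk a]) (Up b u)) (Tens (Tens f (Id [:: Blk b])) (Id [:: Red u])))
      (Comp (Tens f (Id [:: Red u; Blk b])) (Tens (Id [:: Blk a]) (Up b u))).
Proof.
move=> Ha Hb [Hf Sf Tf].
rewrite tassoc //= tid /=.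
rewrite slideA; try by wt.
rewrite slideB; try by wt.
Qed.

Lemma mid2 a b f u : (0 < a)%N -> (0 < b)%N -> endo a f -> natU1 a f u ->
  eqv (Comp (Tens (Up a u) (Id [:: Blk b])) (Tens f (Id [:: Red u; Blk b])))
      (Comp (Tens (Id [:: Red u]) (Tens f (Id [:: Blk b]))) (Tens (Up a u) (Id [:: Blk b]))).
Proof.
move=> Ha Hb [Hf Sf Tf] N.
rewrite -(tid [:: Red u] [:: Blk b]) -tassoc //.
rewrite -tens_comp_r; last by wt.
rewrite N tens_comp_r; last by wt.
by rewrite tassoc.
Qed.

Lemma natMDS a b f u : (0 < a)%N -> (0 < b)%N -> endo a f -> natU1 a f u ->
  natU1 (a + b) (Comp (Merge a b) (Comp (Tens f (Id [:: Blk b])) (Defs.Split a b))) u.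
Proof.
move=> Ha Hb Ef N; have [Hf Sf Tf] := Ef; rewrite /natU1.
have Hab : (0 < a + b)%N by rewrite addn_gt0 Ha.
rewrite tens_comp_r; try by wt.
rewrite tens_comp_r; try by wt.
rewrite tens_comp_l; try by wt.
rewrite tens_comp_l; try by wt.
rewrite -cassoc; try by wt.
rewrite R9d' //.
rewrite cassoc; try by wt.
rewrite cassoc; try by wt.
rewrite -(@cassoc _ (Tens (Id [:: Blk a]) (Up b u))); try by wt.
rewrite mid1 //.
rewrite -(@cassoc _ (Tens (Up a u) (Id [:: Blk b]))); try by wt.
rewrite -(@cassoc _ (Tens (Up a u) (Id [:: Blk b]))); try by wt.
rewrite mid2 //.
rewrite cassoc; try by wt.
rewrite cassoc; try by wt.
rewrite -R9a' //.
rewrite cassoc; try by wt.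
rewrite cassoc; try by wt.
Qed.

Lemma omega_0 r : (0 < r)%N -> omega R r 0 = Id [:: Blk r].
Proof. by move=> Hr; rewrite /omega /= idb_pos. Qed.

Lemma omega_mid r k : (0 < k)%N -> (k < r)%N ->
  omega R r k = Comp (Merge k (r - k)) (Comp (Tens (Defs.Dot k) (Id [:: Blk (r - k)])) (Defs.Split k (r - k))).
Proof.
move=> Hk Hkr; have Hrk : (0 < r - k)%N by rewrite subn_gt0.
rewrite /omega; case: eqP => [E|_]; first by rewrite E in Hk.
rewrite ltnNge (ltnW Hkr) /=.
by rewrite mergeT_pos // splitT_pos // dotT_pos // idb_pos.
Qed.

Lemma omega_rr r : (0 < r)%N -> eqv (omega R r r) (Defs.Dot r).
Proof.
move=> Hr; rewrite /omega; case: eqP => [E|_]; first by rewrite E in Hr.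
rewrite ltnn subnn /mergeT /splitT /dotT /idb /blk /= orbT addn0.
case: eqP => [E|_]; first by rewrite E in Hr.
rewrite tunitr; try by wt.
rewrite idl; try by wt.
rewrite idr; try by wt.
Qed.

Lemma omega_endo r k : (0 < r)%N -> (k <= r)%N -> endo r (omega R r k).
Proof.
move=> Hr Hkr; case: (posnP k) => [->|Hk].
  by rewrite omega_0 // /endo; wt.
case: (ltngtP k r) Hkr => // [Hlt|->] _.
  rewrite omega_mid // /endo; wt; first [by rewrite subn_gt0 | by rewrite subnKC // ltnW].
rewrite /omega; case: eqP => [E|_]; first by rewrite E in Hr.
rewrite ltnn subnn /mergeT /splitT /dotT /idb /blk /= orbT addn0.
case: eqP => [E|_]; first by rewrite E in Hr.
rewrite /endo; wt.
Qed.

Lemma natU1_eqv r f f' u : eqv f f' -> natU1 r f u -> natU1 r f' u.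
Proof. by move=> E; rewrite /natU1 E. Qed.

Lemma omega_nat r k u : (0 < r)%N -> (k <= r)%N ->
  (forall j, (0 < j)%N -> (j <= k)%N -> natU1 j (Defs.Dot j) u) -> natU1 r (omega R r k) u.
Proof.
move=> Hr Hkr H; case: (posnP k) => [->|Hk].
  by rewrite omega_0 //; apply: nat_id.
case: (ltngtP k r) Hkr => // [Hlt|E] _; last first.
  subst k; apply: (@natU1_eqv _ (Defs.Dot r)); first by symmetry; apply: omega_rr.
  exact: H.
  rewrite omega_mid //.
  have Hrk : (0 < r - k)%N by rewrite subn_gt0.
  have := @natMDS k (r - k) (Defs.Dot k) u Hk Hrk.
  rewrite subnKC ?(ltnW Hlt) //; apply.
    by rewrite /endo; wt.
  exact: H.
Qed.

Lemma endo_tsum r l : (forall f, List.In f l -> endo r f) ->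
  endo r (tsum [:: Blk r] [:: Blk r] l).
Proof.
elim: l => [|f l IH] H /=; first by rewrite /endo; wt.
apply: endo_add; first exact: H (or_introl erefl).
by apply: IH => g Hg; apply: H; right.
Qed.

Lemma In_map_seq (A : Type) (F : nat -> A) (s : seq nat) y :
  List.In y (map F s) -> exists2 x, x \in s & y = F x.
Proof.
elim: s => [|x s IH] //= [<-|/IH [z Hz ->]]; first by exists x; rewrite ?mem_head.
by exists z; rewrite // in_cons Hz orbT.
Qed.

Lemma gpoly_endo r (v : R) : (0 < r)%N -> endo r (gpoly r v).
Proof.
move=> Hr; rewrite /gpoly blk_pos //; apply: endo_tsum => f Hf; have [i _ ->] := In_map_seq Hf.
by apply: endo_scale; apply: omega_endo => //; rewrite leq_subr.
Qed.

Lemma gpoly_nat r (v : R) u : (0 < r)%N ->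
  (forall j, (0 < j)%N -> (j <= r)%N -> natU1 j (Defs.Dot j) u) -> natU1 r (gpoly r v) u.
Proof.
move=> Hr H; rewrite /gpoly blk_pos //.
have := @nat_tsum r [seq Scale ((-1) ^+ i * \prod_(j < i) (v + j%:R))%R (omega R r (r - i)) | i <- iota 0 r.+1] u Hr.
case=> // f Hf; have [i _ ->] := In_map_seq Hf; split.
  by apply: endo_scale; apply: omega_endo => //; rewrite leq_subr.
apply: nat_scale => //; first by apply: omega_endo => //; rewrite leq_subr.
apply: omega_nat => //; first by rewrite leq_subr.
move=> j Hj Hji; apply: H => //; exact: leq_trans Hji (leq_subr _ _).
Qed.

Lemma gpoly_self r u : (0 < r)%N -> natU1 r (gpoly r u) u.
Proof.
move=> Hr; rewrite /natU1.
have E1 := e_R7du u Hr; have E2 := e_R7ud u Hr.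
rewrite upT_pos // downT_pos // in E1 E2.
have [Hg Sg Tg] := gpoly_endo u Hr.
rewrite -E1 -cassoc; try by wt.
by rewrite E2.
Qed.

Lemma nat_add_cancel r f g u : (0 < r)%N -> endo r f -> endo r g ->
  natU1 r (Add f g) u -> natU1 r g u -> natU1 r f u.
Proof.
move=> Hr [Hf Sf Tf] [Hg Sg Tg]; rewrite /natU1 => N Ng.
apply: (add_cancel (Q := Comp (Up r u) (Tens g (Id [:: Red u])))
                   (Q' := Comp (Tens (Id [:: Red u]) g) (Up r u))); try by wt.
move: N; rewrite tensDl; try by wt.
rewrite tensDr; try by wt.
rewrite compDr; try by wt.
by rewrite compDl; try by wt.
Qed.

Lemma nat_dot r u : (0 < r)%N -> natU1 r (Defs.Dot r) u.
Proof.
elim/ltn_ind: r => r IH Hr.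
have G := gpoly_self u Hr.
move: G; rewrite /gpoly blk_pos // /= => G.
set Y := tsum _ _ _ in G.
have EY : endo r Y.
  apply: endo_tsum => f Hf; have [i _ ->] := In_map_seq Hf.
  by apply: endo_scale; apply: omega_endo => //; rewrite leq_subr.
have NY : natU1 r Y u.
  have := @nat_tsum r [seq Scale ((-1) ^+ i * \prod_(j < i) (u + j%:R))%R (omega R r (r - i)) | i <- iota 1 r] u Hr.
  case=> // f Hf; have [i Hi ->] := In_map_seq Hf.
  have Hi1 : (1 <= i)%N by move: Hi; rewrite mem_iota => /andP [].
  split.
    by apply: endo_scale; apply: omega_endo => //; rewrite leq_subr.
  apply: nat_scale => //; first by apply: omega_endo => //; rewrite leq_subr.
  apply: omega_nat => //; first by rewrite leq_subr.
  move=> j Hj Hji; apply: IH => //.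
  apply: leq_ltn_trans Hji _; by rewrite ltn_subrL Hi1 Hr.
have EX : endo r (Scale ((-1) ^+ 0 * \prod_(j < 0) (u + j%:R))%R (omega R r (r - 0))).
  by apply: endo_scale; apply: omega_endo; rewrite ?subn0.
have := nat_add_cancel Hr EX EY G NY.
rewrite GRing.expr0 big_ord0 GRing.mulr1 subn0.
apply: natU1_eqv.
rewrite scale1; first exact: omega_rr.
by case: (omega_endo Hr (leqnn r)).
Qed.

Definition g_list r (vs : seq R) : term :=
  foldr (fun x acc => Comp (gpoly r x) acc) (idb R r) vs.

Lemma glist_endo r vs : (0 < r)%N -> endo r (g_list r vs).
Proof.
move=> Hr; elim: vs => [|v vs IH] /=; first by rewrite idb_pos // /endo; wt.
by apply: endo_comp => //; apply: gpoly_endo.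
Qed.

Lemma glist_nat r vs u : (0 < r)%N -> natU1 r (g_list r vs) u.
Proof.
move=> Hr; elim: vs => [|v vs IH] /=; first by rewrite idb_pos //; apply: nat_id.
apply: nat_comp => //; [exact: gpoly_endo | exact: glist_endo | ].
apply: gpoly_nat => // j Hj _; exact: nat_dot.
Qed.

Lemma glist_rcons r vs v : (0 < r)%N ->
  eqv (g_list r (rcons vs v)) (Comp (g_list r vs) (gpoly r v)).
Proof.
move=> Hr; have [Hg Sg Tg] := gpoly_endo v Hr.
elim: vs => [|x vs IH] /=.
  rewrite idb_pos // idr; try by wt.
  rewrite idl; try by wt.
have [Hl Sl Tl] := glist_endo vs Hr; have [Hx Sx Tx] := gpoly_endo x Hr.
rewrite IH cassoc //; by wt.
Qed.

Definition fact_spec (L : term) (s w : word) :=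
  exists A B, [/\ wtP A, wtP B, src B = s & tgt B = w] /\ [/\ src A = w, tgt A = s & eqv L (Comp A B)].

Lemma key r (vs : seq R) : (0 < r)%N -> forall y : word,
  fact_spec (Tens (Id (map Red vs)) (Tens (g_list r vs) (Id y)))
            (map Red vs ++ Blk r :: y) (Blk r :: map Red vs ++ y).
Proof.
move=> Hr; elim/last_ind: vs => [|vs v IH] y.
  exists (Id (Blk r :: y)), (Id (Blk r :: y)); split; split => //=.
  rewrite idb_pos // tunitl; try by wt.
  rewrite tid idl //.
have [A [B [[HA HB SB TB] [SA TA EAB]]]] := IH (Red v :: y).
have [Hg Sg Tg] := gpoly_endo v Hr.
have [HG SG TG] := glist_endo vs Hr.
have [HG2 SG2 TG2] := glist_endo (rcons vs v) Hr.
have NG := glist_nat vs v Hr.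
have E1 := e_R7ud v Hr; rewrite upT_pos // downT_pos // in E1.
set mvs := map Red vs.
set P := Tens (Id mvs) (Tens (Up r v) (Id y)).
set Q := Tens (Id mvs) (Tens (Down v r) (Id y)).
exists (Comp P A), (Comp B Q).
have EE : eqv (Tens (Id (map Red (rcons vs v))) (Tens (g_list r (rcons vs v)) (Id y)))
              (Comp P (Comp (Comp A B) Q)).
  rewrite map_rcons -cats1 -tid tassoc; try by wt.
  rewrite glist_rcons // -(@tassoc _ (Id [:: Red v])); try by wt.
  rewrite tens_comp_l; try by wt.
  rewrite -E1 -cassoc; try by wt.
  rewrite -NG cassoc; try by wt.
  rewrite tens_comp_r; try by wt.
  rewrite tens_comp_r; try by wt.
  rewrite tens_comp_l; try by wt.
  rewrite tens_comp_l; try by wt.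
  rewrite tassoc; try by wt.
  rewrite tid /= -EAB //.
have Em : [seq Red i | i <- rcons vs v] = mvs ++ [:: Red v] by rewrite map_rcons -cats1.
split; split; last first.
  rewrite EE -cassoc; try by wt.
  rewrite -(@cassoc _ P); try by wt.
  rewrite cassoc; try by wt.
all: rewrite ?Em -?catA; by wt.
Qed.
End Nat.

Section Final.
Variable R : comPzRingType.
Local Notation word := (seq (letter R)).

Definition FW (vs : seq R) (gs : seq (seq nat)) : word :=
  flatten [seq Red p.1 :: map Blk p.2 | p <- zip vs gs].

Lemma FW_split k : forall (vs : seq R) gs x xs,
  (forall j, (j < k)%N -> nth [::] gs j = [::]) -> (k < size vs)%N -> nth [::] gs k = x :: xs ->
  FW vs gs = map Red (take k.+1 vs) ++ Blk x :: (map Blk xs ++ FW (drop k.+1 vs) (drop k.+1 gs)) /\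
  FW vs (set_nth [::] gs k xs) = map Red (take k.+1 vs) ++ (map Blk xs ++ FW (drop k.+1 vs) (drop k.+1 gs)).
Proof.
have EF : forall v vs g gs, FW (v :: vs) (g :: gs) = Red v :: map Blk g ++ FW vs gs by [].
elim: k => [|k IH] [|v vs] [|g gs] x xs H //=.
- by move=> _ ->; rewrite take0 !drop0 !EF.
- move=> Hk Hn; have Hg : g = [::] by exact: (H 0%N).
  subst g.
  have [E1 E2] := IH vs gs x xs (fun j Hj => H j.+1 Hj) Hk Hn.
  by rewrite !EF E1 E2.
Qed.

Lemma catL_inj (A : Type) (s a b : seq A) : s ++ a = s ++ b -> a = b.
Proof. by elim: s => //= x s IH [] /IH. Qed.

Lemma all_set_nth (P : pred (seq nat)) s n y : all P s -> P y -> (n < size s)%N ->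
  all P (set_nth [::] s n y).
Proof.
elim: s n => [|x s IH] [|n] //= /andP [Px Ps] Py Hn.
- by rewrite Py Ps.
- by rewrite Px IH.
Qed.

End Final.

Theorem lemma4p6 (R : comPzRingType) (l : nat) (u : seq R) (i r : nat)
  (gam : seq (seq nat)) (y : seq (letter R)) :
  (1 <= l)%N -> size u = l -> (1 <= i)%N -> (i <= l)%N -> (1 <= r)%N ->
  strict_multicomp l gam ->
  (forall j, (j < i)%N -> nth [::] gam j = [::]) ->
  (exists rest, nth [::] gam i = r :: rest) ->
  wword u gam = map Red (take i u) ++ Blk r :: y ->
  cyc_zero l u (wword u gam)
    (Tens (Id (map Red (take i u))) (Tens (g_ri r u i) (Id y))).
Proof.
move=> Hl Hu Hi Hil Hr [Hsz Hpos] H0 [rest Hrest] Hw.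
case: i Hi Hil H0 Hrest Hw => [|k] // _ Hil H0 Hrest Hw.
case: gam Hsz Hpos H0 Hrest Hw => [|g0 gs] // [Hsz] Hpos H0 Hrest Hw.
have Hg0 : g0 = [::] by exact: (H0 0%N).
subst g0.
have Hk : (k < size u)%N by rewrite Hu.
have [E1 E2] := @FW_split R k u gs r rest (fun j Hj => H0 j.+1 Hj) Hk Hrest.
have Ew : wword u ([::] :: gs) = FW u gs by [].
rewrite Ew E1 in Hw; have Hy := catL_inj Hw; case: Hy => Hy.
rewrite Ew E1 Hy.
have [A [B [[HA HB SB TB] [SA TA EAB]]]] := key (take k.+1 u) Hr y.
set s := map Red (take k.+1 u) ++ Blk r :: y.
exists (Add (Comp A B) (Zero s s)); split.
  apply: (ci_add (w := Blk r :: map Red (take k.+1 u) ++ y)).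
  - exists ([:: r] :: set_nth [::] gs k rest); split; [split|split] => //.
    + by rewrite /= size_set_nth Hsz; congr S; apply/maxn_idPr.
    + have Hmem : r :: rest \in [::] :: gs by rewrite -Hrest mem_nth // /= ltnS Hsz.
      have /andP [Hr' Hrest'] := allP Hpos _ Hmem.
      apply/andP; split; first by rewrite /= Hr.
      apply: all_set_nth; [exact: Hpos | exact: Hrest' |].
      by rewrite Hsz.
    + by rewrite /wword /= -/(FW u _) E2 Hy.
  - by rewrite /s -SB -TB; apply: wt_typed.
  - by rewrite /s -SA -TA; apply: wt_typed.
  - exact: ci_zero.
rewrite add0 //; by wt.
Qed.
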